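(* Let $\rho$ be an $n$-qubit state positively represented under a frame function $F$, let $U$ be an $n$-qubit Clifford unitary with symplectic map $S$ and phase function $P$, and let $F'(\mathbf{a})=F(S^{-1}(\mathbf{a}))+P(S^{-1}(\mathbf{a}))$. Let $I\subseteq[n]$ be such that the map $q(\mathbf{a}_z)=F'(\mathbf{0}_x,\mathbf{a}_z)$, restricted to $Z_I=\{\mathbf{a}_z\in\mathbb{Z}_2^n: a_{iz}=0\ \forall i\notin I\}$, is a Boolean polynomial of degree at most $2$. Then there exist a linear subspace $V\subseteq Z_I$ with $\dim V\ge\lfloor(|I|+1)/2\rfloor$ and a vector $\mathbf{k}\in\mathbb{Z}_2^n$ with $q(\mathbf{a}_z)=\mathbf{k}\cdot\mathbf{a}_z$ for all $\mathbf{a}_z\in V$, such that for any basis $\mathbf{v}_1,\dots,\mathbf{v}_m$ of $V$ and any $\mathbf{c}\in\mathbb{Z}_2^m$, $$\Pr_{\mathbf{y}\sim p}\big[\mathbf{v}_j\cdot\mathbf{y}=c_j\ \forall j\big]=\sum_{\mathbf{u}:\ \mathbf{v}_j\cdot(S(\mathbf{u})_x+\mathbf{k})=c_j\ \forall j}W^F_\rho(\mathbf{u}).$$ In particular, at least $\lfloor(|I|+1)/2\rfloor$ linearly independent linear Boolean functions of the measurement outcomes on the qubits in $I$ can be jointly sampled exactly by drawing $\mathbf{u}\sim W^F_\rho$ and outputting $(\mathbf{v}_j\cdot(S(\mathbf{u})_x+\mathbf{k}))_{j=1}^m$.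
   Context: Let $n\ge 1$. Phase-space points are $\mathbf{u}=(\mathbf{u}_x,\mathbf{u}_z)=(u_{1x},\dots,u_{nx},u_{1z},\dots,u_{nz})\in\mathbb{Z}_2^{2n}$. For $\mathbf{a}\in\mathbb{Z}_2^{2n}$ let $T_{\mathbf{a}}=\bigotimes_{j=1}^n i^{a_{jx}a_{jz}}X^{a_{jx}}Z^{a_{jz}}$, where $X,Z$ are the single-qubit Pauli matrices. The symplectic product is $[\mathbf{u},\mathbf{a}]=\mathbf{u}_x\cdot\mathbf{a}_z+\mathbf{u}_z\cdot\mathbf{a}_x\pmod 2$. A frame function is any $F:\mathbb{Z}_2^{2n}\to\mathbb{Z}_2$ with $F(\mathbf{0})=0$. The phase point operator is $A^F(\mathbf{u})=2^{-n}\sum_{\mathbf{a}\in\mathbb{Z}_2^{2n}}(-1)^{[\mathbf{u},\mathbf{a}]+F(\mathbf{a})}T_{\mathbf{a}}$, and the framed Wigner function of an $n$-qubit density matrix $\rho$ is $W^F_\rho(\mathbf{u})=2^{-n}\mathrm{Tr}[\rho A^F(\mathbf{u})]$, so that $\rho=\sum_{\mathbf{u}}W^F_\rho(\mathbf{u})A^F(\mathbf{u})$. The state $\rho$ is positively represented under $F$ if $W^F_\rho(\mathbf{u})\ge 0$ for all $\mathbf{u}$. For an $n$-qubit Clifford unitary $U$ there are a linear bijection $S$ of $\mathbb{Z}_2^{2n}$ preserving $[\cdot,\cdot]$ and a function $P:\mathbb{Z}_2^{2n}\to\mathbb{Z}_2$ (the phase function) with $UT_{\mathbf{a}}U^\dagger=(-1)^{P(\mathbf{a})}T_{S(\mathbf{a})}$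 for all $\mathbf{a}$. $p(\mathbf{y})=\langle\mathbf{y}|U\rho U^\dagger|\mathbf{y}\rangle$ for $\mathbf{y}\in\mathbb{Z}_2^n$; $(\mathbf{0}_x,\mathbf{a}_z)$ is the point with $x$-part zero. *)

(* Defs.v *)
From HB Require Import structures.
From mathcomp Require Import all_boot all_order all_algebra.
Set Implicit Arguments. Unset Strict Implicit. Unset Printing Implicit Defensive.
Import Order.TTheory GRing.Theory Num.Theory.
Local Open Scope ring_scope.

Notation bits n := 'rV['F_2]_n.
Notation phase n := 'rV['F_2]_(n + n).
Definition xpart n (u : phase n) : bits n := lsubmx u.
Definition zpart n (u : phase n) : bits n := rsubmx u.
Definition zpoint n (az : bits n) : phase n := row_mx 0 az.

Definition dot n (v w : bits n) : 'F_2 := \sum_(i < n) v 0 i * w 0 i.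
Definition sympl n (u a : phase n) : 'F_2 :=
  dot (xpart u) (zpart a) + dot (zpart u) (xpart a).

Definition sgn (C : numClosedFieldType) (b : 'F_2) : C := (-1) ^+ (b : nat).

(* Hilbert space dimension 2^n: basis vectors |y> indexed by y : bits n,
   via enum_rank / enum_val. *)
Notation dimH n := #|{: bits n}|.
Notation op C n := 'M[C]_(dimH n).

Definition adj (C : numClosedFieldType) m p (A : 'M[C]_(m, p)) : 'M[C]_(p, m) :=
  (map_mx Num.conj A)^T.

Definition PX (C : numClosedFieldType) : 'M[C]_2 :=
  \matrix_(r, s) (r != s)%:R.
Definition PZ (C : numClosedFieldType) : 'M[C]_2 :=
  \matrix_(r, s) ((r == s)%:R * (-1) ^+ (r : nat)).
Definition pauli1 (C : numClosedFieldType) (a b : 'F_2) : 'M[C]_2 :=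
  'i ^+ ((a : nat) * (b : nat)) *: (PX C ^+ (a : nat) * PZ C ^+ (b : nat)).
Definition bit2ord (b : 'F_2) : 'I_2 := inord (b : nat).

(* T_a = tensor_j i^{a_jx a_jz} X^{a_jx} Z^{a_jz}, written entrywise:
   <x| T_a |y> = prod_j <x_j| i^{..} X^{a_jx} Z^{a_jz} |y_j>. *)
Definition T (C : numClosedFieldType) n (a : phase n) : op C n :=
  \matrix_(i, j)
    \prod_(k < n) pauli1 C (xpart a 0 k) (zpart a 0 k)
                         (bit2ord ((enum_val i : bits n) 0 k)) (bit2ord ((enum_val j : bits n) 0 k)).

Definition Aop (C : numClosedFieldType) n (F : phase n -> 'F_2) (u : phase n)
  : op C n :=
  ((2 : C) ^+ n)^-1 *: \sum_(a : phase n) sgn C (sympl u a + F a) *: T C a.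

Definition Wig (C : numClosedFieldType) n (F : phase n -> 'F_2)
  (rho : op C n) (u : phase n) : C :=
  ((2 : C) ^+ n)^-1 * \tr (rho *m Aop C F u).

Definition density (C : numClosedFieldType) m (rho : 'M[C]_m) : Prop :=
  [/\ adj rho = rho,
      forall v : 'cV[C]_m, 0 <= (adj v *m rho *m v) 0 0
    & \tr rho = 1].

Definition unitary (C : numClosedFieldType) m (U : 'M[C]_m) : Prop :=
  U *m adj U = 1%:M.

Definition in_ZI n (I : {set 'I_n}) (az : bits n) : Prop :=
  forall i, i \notin I -> az 0 i = 0.

Definition outp (C : numClosedFieldType) n (U rho : op C n) (y : bits n) : C :=
  (U *m rho *m adj U) (enum_rank y) (enum_rank y).

(* Main.v *)
Require Import Defs.
From HB Require Import structures.
From mathcomp Require Import all_boot all_order all_algebra.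
From mathcomp Require Import ring zify.
Import Order.TTheory GRing.Theory Num.Theory.
Local Open Scope ring_scope.
Set Implicit Arguments. Unset Strict Implicit. Unset Printing Implicit Defensive.

Lemma F2_cases (x : 'F_2) : x = 0 \/ x = 1.
Proof. have : ((x : nat) < 2)%N by case: x.
case E: (x : nat) => [|[|m]] // _; [left|right]; by apply/val_inj. Qed.
Lemma F2_add11 : (1 + 1 : 'F_2) = 0. Proof. by apply/val_inj. Qed.
Lemma F2_addxx (x : 'F_2) : x + x = 0.
Proof. by case: (F2_cases x) => ->; [rewrite addr0|exact: F2_add11]. Qed.
Lemma F2_opp (x : 'F_2) : - x = x.
Proof. by apply/eqP; rewrite eq_sym -subr_eq0 opprK F2_addxx. Qed.
Lemma F2_add_eq0 (x y : 'F_2) : (x + y == 0) = (x == y).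
Proof. by rewrite -{2}(F2_opp y) addr_eq0. Qed.
Lemma F2_mx_opp m k (x : 'M['F_2]_(m,k)) : - x = x.
Proof. by apply/matrixP => i j; rewrite mxE F2_opp. Qed.
Lemma F2_mx_addxx m k (x : 'M['F_2]_(m,k)) : x + x = 0.
Proof. by rewrite -{1}(F2_mx_opp x) addNr. Qed.
Lemma F2_mx_add_eq0 m k (x y : 'M['F_2]_(m,k)) : (x + y == 0) = (x == y).
Proof. by rewrite -{2}(F2_mx_opp y) addr_eq0. Qed.

Section Sgn.
Variable C : numClosedFieldType.
Lemma sgn0 : sgn C 0 = 1. Proof. by rewrite /sgn expr0. Qed.
Lemma sgn1 : sgn C 1 = -1. Proof. by rewrite /sgn expr1. Qed.
Lemma sgnD a b : sgn C (a + b) = sgn C a * sgn C b.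
Proof.
case: (F2_cases a) => ->; case: (F2_cases b) => ->;
  rewrite ?add0r ?addr0 ?sgn0 ?mul1r ?mulr1 // F2_add11 sgn0 sgn1 mulrNN mulr1 //.
Qed.
Lemma sgn_sq a : sgn C a * sgn C a = 1.
Proof. by rewrite -sgnD F2_addxx sgn0. Qed.
Lemma sgn_sum (I : finType) (f : I -> 'F_2) :
  sgn C (\sum_i f i) = \prod_i sgn C (f i).
Proof. exact: (big_morph _ sgnD sgn0). Qed.
Lemma sgn1_neq : sgn C 1 != 1.
Proof. rewrite sgn1 -subr_eq0 -opprD oppr_eq0 -mulr2n mulrn_eq0 /=; exact: oner_neq0. Qed.
End Sgn.

Section Dot.
Lemma dotDl n (a b c : bits n) : dot (a + b) c = dot a c + dot b c.
Proof. by rewrite /dot -big_split; apply: eq_bigr => i _; rewrite mxE mulrDl. Qed.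
Lemma dotZl n x (a c : bits n) : dot (x *: a) c = x * dot a c.
Proof. by rewrite /dot mulr_sumr; apply: eq_bigr => i _; rewrite mxE mulrA. Qed.
Lemma dotC n (a b : bits n) : dot a b = dot b a.
Proof. by apply: eq_bigr => i _; rewrite mulrC. Qed.
Lemma dot0l n (a : bits n) : dot 0 a = 0.
Proof. by rewrite /dot big1 // => i _; rewrite mxE mul0r. Qed.
Lemma dot0r n (a : bits n) : dot a 0 = 0.
Proof. by rewrite dotC dot0l. Qed.
Lemma dotDr n (a b c : bits n) : dot c (a + b) = dot c a + dot c b.
Proof. by rewrite !(dotC c) dotDl. Qed.
Lemma dot_suml n (I : finType) (f : I -> bits n) c :
  dot (\sum_i f i) c = \sum_i dot (f i) c.
Proof. exact: (big_morph (fun a => dot a c) (fun a b => dotDl a b c) (dot0l c)). Qed.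
Lemma dot_row_mx n m (a c : bits n) (b d : bits m) :
  dot (row_mx a b) (row_mx c d) = dot a c + dot b d.
Proof.
rewrite /dot big_split_ord /=; congr (_ + _); apply: eq_bigr => i _;
  by rewrite ?row_mxEl ?row_mxEr.
Qed.
Lemma dot_deltal n i (z : bits n) : dot (delta_mx 0 i) z = z 0 i.
Proof.
rewrite /dot (bigD1 i) //= big1 ?addr0 => [|j /negbTE ji]; rewrite mxE ?eqxx ?mul1r //.
by rewrite ji /= mul0r.
Qed.
End Dot.
Section Char.
Variable C : numClosedFieldType.
Lemma card_bits N : #|{: bits N}| = (2 ^ N)%N.
Proof. by rewrite card_mx card_Fp // mul1n. Qed.

Lemma char_sum N (z : bits N) :
  \sum_(t : bits N) sgn C (dot t z) = (z == 0)%:R * (2%:R ^+ N).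
Proof.
have [->|nz] := eqVneq z 0.
  rewrite mul1r (eq_bigr (fun _ => 1)) => [|t _]; last by rewrite dot0r sgn0.
  by rewrite sumr_const card_bits natrX.
rewrite mul0r.
have [i zi] : exists i, z 0 i = 1.
  suff /existsP[i /eqP zi] : [exists i, z 0 i == 1] by exists i.
  apply: contraR nz => /existsPn H; apply/eqP/rowP => i.
  by rewrite mxE; case: (F2_cases (z 0 i)) (H i) => ->; rewrite ?eqxx.
set s := \sum_t _.
have : s = - s.
  rewrite {1}/s (reindex_inj (addIr (delta_mx 0 i))) /= /s -sumrN.
  apply: eq_bigr => t _; by rewrite dotDl dot_deltal zi sgnD sgn1 mulrN1.
move/eqP; rewrite -subr_eq0 opprK -mulr2n mulrn_eq0 /=; exact/eqP.
Qed.
End Char.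
Definition swap n (c : phase n) : phase n := row_mx (zpart c) (xpart c).
Lemma sympl_dot n (u c : phase n) : sympl u c = dot u (swap c).
Proof. by rewrite /swap -{2}(hsubmxK u) dot_row_mx. Qed.
Lemma swapD n (a b : phase n) : swap (a + b) = swap a + swap b.
Proof. by rewrite /swap /xpart /zpart !linearD /= add_row_mx. Qed.
Lemma swap_eq0 n (c : phase n) : (swap c == 0) = (c == 0).
Proof.
apply/eqP/eqP => [|->]; last by rewrite /swap /xpart /zpart linear0 linear0 row_mx0.
rewrite /swap -row_mx0 => /eq_row_mx [h1 h2]; by rewrite -(hsubmxK c) -/(xpart c) -/(zpart c) h1 h2 row_mx0.
Qed.
Lemma symplDr n (u a b : phase n) : sympl u (a + b) = sympl u a + sympl u b.
Proof. by rewrite !sympl_dot swapD dotDr. Qed.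
Lemma sympl_char (C : numClosedFieldType) n (c : phase n) :
  \sum_(u : phase n) sgn C (sympl u c) = (c == 0)%:R * (2%:R ^+ (n + n)).
Proof.
rewrite (eq_bigr (fun u => sgn C (dot u (swap c)))) => [|u _]; last by rewrite sympl_dot.
by rewrite char_sum swap_eq0.
Qed.

Lemma F2_val0 : nat_of_ord (0 : 'F_2) = 0%N. Proof. by []. Qed.
Lemma F2_val1 : nat_of_ord (1 : 'F_2) = 1%N. Proof. by []. Qed.
Lemma bit2ord0 : bit2ord 0 = 0. Proof. by apply/val_inj; rewrite /bit2ord F2_val0 /= inordK. Qed.
Lemma bit2ord1 : bit2ord 1 = 1. Proof. by apply/val_inj; rewrite /bit2ord F2_val1 /= inordK. Qed.
Lemma pauli1_00 (C : numClosedFieldType) : pauli1 C 0 0 = 1.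
Proof. by rewrite /pauli1 F2_val0 muln0 !expr0 mulr1 scale1r. Qed.
Lemma pauli1_01 (C : numClosedFieldType) : pauli1 C 0 1 = PZ C.
Proof. by rewrite /pauli1 F2_val0 F2_val1 mul0n !expr0 expr1 mul1r scale1r. Qed.
Lemma pauli1_0 (C : numClosedFieldType) (b y y' : 'F_2) :
  pauli1 C 0 b (bit2ord y) (bit2ord y') = (y == y')%:R * sgn C (b * y).
Proof.
case: (F2_cases b) => ->; rewrite ?pauli1_00 ?pauli1_01 ?mul0r ?sgn0 ?mulr1 ?mul1r;
case: (F2_cases y) => ->; case: (F2_cases y') => ->;
rewrite ?bit2ord0 ?bit2ord1 /PZ !mxE ?sgn0 ?sgn1 ?expr0 ?expr1 ?mulr1 ?mul1r.
all: reflexivity. Qed.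
Definition zsig (C : numClosedFieldType) n (w : bits n) : 'rV[C]_(dimH n) :=
  \row_i sgn C (dot w (enum_val i : bits n)).
Lemma T_zpoint (C : numClosedFieldType) n (w : bits n) :
  T C (zpoint w) = diag_mx (zsig C w).
Proof.
apply/matrixP => i j; rewrite [T C _ i j]mxE [diag_mx _ i j]mxE [zsig C w 0 i]mxE.
have zx : xpart (zpoint w) = 0 by rewrite /zpoint /xpart row_mxKl.
have zz : zpart (zpoint w) = w by rewrite /zpoint /zpart row_mxKr.
rewrite zx zz.
rewrite (eq_bigr (fun k => ((enum_val i : bits n) 0 k == (enum_val j : bits n) 0 k)%:R
   * sgn C (w 0 k * (enum_val i : bits n) 0 k))) => [|k _]; last by rewrite [(0 : bits n) 0 k]mxE pauli1_0.
rewrite big_split /= -sgn_sum.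
have [<-|ij] := eqVneq i j.
  by rewrite big1 ?mul1r ?mulr1n // => k _; rewrite eqxx.
rewrite mulr0n.
have [k Hk] : exists k, (enum_val i : bits n) 0 k != (enum_val j : bits n) 0 k.
  suff /existsP[k Hk] : [exists k, (enum_val i : bits n) 0 k != (enum_val j : bits n) 0 k] by exists k.
  apply: contraR ij => /existsPn H; apply/eqP/enum_val_inj/rowP => k.
  by have := H k; rewrite negbK => /eqP.
by rewrite (bigD1 k) //= (negbTE Hk) !mul0r.
Qed.

Lemma T_zero (C : numClosedFieldType) n : T C (0 : phase n) = 1%:M.
Proof.
have -> : (0 : phase n) = zpoint 0 by rewrite /zpoint row_mx0.
rewrite T_zpoint; apply/matrixP => i j; rewrite !mxE dot0l sgn0 //.
Qed.

Lemma tr_diag_mul (C : numClosedFieldType) m (M : 'M[C]_m) d :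
  \tr (M *m diag_mx d) = \sum_i M i i * d 0 i.
Proof. by rewrite mul_mx_diag /mxtrace; apply: eq_bigr => i _; rewrite mxE. Qed.

Lemma tr_Zw (C : numClosedFieldType) n (M : op C n) (w : bits n) :
  \tr (M *m T C (zpoint w)) =
  \sum_(y : bits n) M (enum_rank y) (enum_rank y) * sgn C (dot w y).
Proof.
rewrite T_zpoint tr_diag_mul.
rewrite (reindex (@enum_rank _)) /=; last first.
  by exists enum_val => x _; [rewrite enum_rankK|rewrite enum_valK].
by apply: eq_bigr => y _; rewrite mxE enum_rankK.
Qed.
Section Wig.
Variable C : numClosedFieldType.
Lemma two_n_neq0 n : ((2 : C) ^+ n) != 0.
Proof. by rewrite expf_neq0 // pnatr_eq0. Qed.

Lemma tr_Aop n F (rho : op C n) u :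
  \tr (rho *m Aop C F u) =
  ((2:C)^+n)^-1 * \sum_(a : phase n) sgn C (sympl u a + F a) * \tr (rho *m T C a).
Proof.
rewrite /Aop -scalemxAr mxtraceZ mulmx_sumr raddf_sum; congr (_ * _).
by apply: eq_bigr => a _ /=; rewrite -scalemxAr mxtraceZ.
Qed.

Lemma wig_char n F (rho : op C n) (b : phase n) :
  \sum_(u : phase n) Wig F rho u * sgn C (sympl u b) = sgn C (F b) * \tr (rho *m T C b).
Proof.
set k := ((2:C)^+n)^-1.
transitivity (\sum_(u : phase n) k * k * \sum_(a : phase n)
   (sgn C (F a) * \tr (rho *m T C a)) * sgn C (sympl u (a + b))).
  apply: eq_bigr => u _; rewrite /Wig tr_Aop -/k -mulrA -mulrA; congr (_ * _).
  rewrite -mulrA; congr (_ * _); rewrite mulr_suml; apply: eq_bigr => a _.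
  rewrite symplDr !sgnD; ring.
rewrite -mulr_sumr exchange_big /=.
rewrite (eq_bigr (fun a => (sgn C (F a) * \tr (rho *m T C a)) * ((a == b)%:R * (2%:R ^+ (n + n))))); last first.
  by move=> a _; rewrite -mulr_sumr sympl_char F2_mx_add_eq0.
rewrite (bigD1 b) //= big1 => [|a /negbTE ->]; last by rewrite mul0r mulr0.
rewrite eqxx mul1r addr0 mulrA mulrC !mulrA exprD -natrX.
have h2 : (2%:R : C) ^+ n * k = 1 by rewrite mulfV ?two_n_neq0.
rewrite natrX /k; field; by rewrite ?two_n_neq0 ?pnatr_eq0.
Qed.
End Wig.
Section Cliff.
Variables (C : numClosedFieldType) (n : nat) (rho : op C n) (F : phase n -> 'F_2)
  (U : op C n) (S Sinv : phase n -> phase n) (P : phase n -> 'F_2).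
Hypotheses (hU : unitary U) (hSK : cancel S Sinv) (hSiK : cancel Sinv S)
  (hsym : forall a b, sympl (S a) (S b) = sympl a b)
  (hcl : forall a, U *m T C a *m adj U = sgn C (P a) *: T C (S a)).

Lemma adjU_U : adj U *m U = 1%:M.
Proof. exact: mulmx1C hU. Qed.

Lemma conj_back a : adj U *m T C (S a) *m U = sgn C (P a) *: T C a.
Proof.
have e : adj U *m (U *m T C a *m adj U) *m U = T C a.
  by rewrite !mulmxA adjU_U mul1mx -!mulmxA adjU_U mulmx1.
move: e; rewrite hcl -scalemxAr -scalemxAl => e.
by rewrite -e scalerA sgn_sq scale1r.
Qed.

Lemma tr_conj b : \tr (U *m rho *m adj U *m T C b) =
  sgn C (P (Sinv b)) * \tr (rho *m T C (Sinv b)).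
Proof.
rewrite -{1}(hSiK b) -!mulmxA mxtrace_mulC -!mulmxA.
by rewrite [adj U *m _]mulmxA conj_back -scalemxAr mxtraceZ.
Qed.

Lemma key w :
  \sum_(y : bits n) outp U rho y * sgn C (dot w y) =
  sgn C (F (Sinv (zpoint w)) + P (Sinv (zpoint w))) *
  \sum_(u : phase n) Wig F rho u * sgn C (dot (xpart (S u)) w).
Proof.
rewrite -tr_Zw tr_conj.
set a := Sinv (zpoint w).
have ht : \tr (rho *m T C a) = sgn C (F a) * \sum_(u : phase n) Wig F rho u * sgn C (sympl u a).
  by rewrite wig_char mulrA sgn_sq mul1r.
rewrite ht mulrA -sgnD addrC; congr (_ * _); apply: eq_bigr => u _.
rewrite -hsym /a hSiK /sympl /zpoint /xpart /zpart row_mxKl row_mxKr dot0r addr0.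
by [].
Qed.

Lemma P0 : linear S -> P 0 = 0.
Proof.
move=> hl.
have S0 : S 0 = 0.
  have := hl 1 0 0; rewrite !scale1r !addr0 => e.
  by apply: (addrI (S 0)); rewrite addr0 -e.
have := hcl 0; rewrite S0 !T_zero mulmx1 hU => /matrixP /(_ (enum_rank (0 : bits n)) (enum_rank (0 : bits n))).
rewrite !mxE eqxx /= mulr1 => /esym e.
case: (F2_cases (P 0)) => // h; move: e; rewrite h => /eqP; by rewrite (negbTE (sgn1_neq C)).
Qed.
End Cliff.
Section Final.
Variables (C : numClosedFieldType) (n m : nat) (vs : m.-tuple (bits n)) (c : bits m).
Definition wt (t : bits m) : bits n := \sum_j t 0 j *: tnth vs j.

Lemma indicator (x : bits n) :
  ([forall j, dot (tnth vs j) x == c 0 j])%:R =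
  ((2:C)^+m)^-1 * \sum_(t : bits m) sgn C (dot t c) * sgn C (dot (wt t) x).
Proof.
set z : bits m := \row_j (dot (tnth vs j) x + c 0 j).
have hz : [forall j, dot (tnth vs j) x == c 0 j] = (z == 0).
  apply/forallP/eqP => [H|/rowP H j]; first by apply/rowP => j; rewrite !mxE; apply/eqP; rewrite F2_add_eq0 H.
  by move: (H j); rewrite !mxE => /eqP; rewrite F2_add_eq0.
have hs : forall t, dot t z = dot (wt t) x + dot t c.
  move=> t; rewrite /wt dot_suml [dot t c]/dot [dot t z]/dot -big_split; apply: eq_bigr => j _.
  by rewrite mxE dotZl mulrDr.
rewrite (eq_bigr (fun t => sgn C (dot t z))) => [|t _]; last by rewrite hs sgnD mulrC.
rewrite char_sum hz mulrCA mulVf ?mulr1 //; exact: two_n_neq0.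
Qed.

Lemma combine (f : bits n -> C) (g : phase n -> C) (X : phase n -> bits n)
  (h : bits n -> 'F_2) (k : bits n) :
  (forall w, \sum_(y : bits n) f y * sgn C (dot w y) =
             sgn C (h w) * \sum_(u : phase n) g u * sgn C (dot (X u) w)) ->
  (forall t, h (wt t) = dot k (wt t)) ->
  \sum_(y : bits n | [forall j : 'I_m, dot (tnth vs j) y == c 0 j]) f y
  = \sum_(u : phase n | [forall j : 'I_m, dot (tnth vs j) (X u + k) == c 0 j]) g u.
Proof.
move=> hkey hq.
set K := ((2:C)^+m)^-1.
rewrite big_mkcond [RHS]big_mkcond /=.
transitivity (\sum_(y : bits n) f y * [forall j, dot (tnth vs j) y == c 0 j]%:R).
  by apply: eq_bigr => y _; case: ifP; rewrite ?mulr1 ?mulr0.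
transitivity (\sum_(u : phase n) g u * [forall j, dot (tnth vs j) (X u + k) == c 0 j]%:R); last first.
  by apply: eq_bigr => y _; case: ifP; rewrite ?mulr1 ?mulr0.
under eq_bigr do rewrite indicator mulrCA mulr_sumr.
under [RHS]eq_bigr do rewrite indicator mulrCA mulr_sumr.
rewrite -mulr_sumr -[RHS]mulr_sumr; congr (_ * _).
rewrite exchange_big [RHS]exchange_big /=; apply: eq_bigr => t _.
transitivity (sgn C (dot t c) * \sum_(y : bits n) f y * sgn C (dot (wt t) y)).
  by rewrite mulr_sumr; apply: eq_bigr => y _; rewrite mulrCA.
rewrite hkey hq mulr_sumr mulr_sumr; apply: eq_bigr => u _.
rewrite (dotC (wt t) (X u + k)) dotDl sgnD (dotC (X u)) (dotC k); ring.
Qed.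
End Final.
Section PartA.
Variables (n : nat) (I : {set 'I_n}).
Definition ZIt : #|I|.-tuple (bits n) := [tuple delta_mx 0 (enum_val i) | i < #|I|].
Definition ZI : {vspace bits n} := <<ZIt>>%VS.

Lemma ZIt_nth (i : 'I_#|I|) : ZIt`_i = delta_mx 0 (enum_val i).
Proof. by rewrite -tnth_nth tnth_mktuple. Qed.

Lemma ZI_in v : v \in ZI -> in_ZI I v.
Proof.
move/coord_span => -> j jI; rewrite summxE big1 // => i _.
rewrite ZIt_nth mxE [delta_mx _ _ _ _]mxE eqxx /=; case: eqP => [ej|]; last by rewrite mulr0.
by move: jI; rewrite ej enum_valP.
Qed.

Lemma dim_ZI : \dim ZI = #|I|.
Proof.
have : free ZIt.
  apply/freeP => k hk i.
  have := congr1 (fun M : bits n => M 0 (enum_val i)) hk; rewrite /= summxE mxE.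
  rewrite (bigD1 i) //= big1 => [|j ji]; rewrite ZIt_nth !mxE ?eqxx ?mulr1 ?addr0 //.
  by rewrite (inj_eq enum_val_inj) eq_sym (negbTE ji) mulr0.
by rewrite /free size_tuple => /eqP.
Qed.
End PartA.
Section Bform.
Variables (n : nat) (Q : 'I_n -> 'I_n -> 'F_2).
Definition phi (x : bits n) : bits n := \row_j \sum_i (Q i j + Q j i) * x 0 i.
Definition Bf (x y : bits n) : 'F_2 := dot (phi x) y.
Definition Sq (x y : bits n) : 'F_2 := \sum_i \sum_j Q i j * x 0 i * y 0 j.

Lemma Bf_expand x y : Bf x y = Sq x y + Sq y x.
Proof.
rewrite /Bf /dot.
transitivity (\sum_j \sum_i (Q i j * x 0 i * y 0 j + Q j i * y 0 j * x 0 i)).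
  by apply: eq_bigr => j _; rewrite mxE mulr_suml; apply: eq_bigr => i _; ring.
rewrite (eq_bigr (fun j => \sum_i Q i j * x 0 i * y 0 j + \sum_i Q j i * y 0 j * x 0 i)); last first.
  by move=> j _; rewrite big_split.
rewrite big_split /= exchange_big /=; by [].
Qed.

Lemma Bf_sym x y : Bf x y = Bf y x.
Proof. by rewrite !Bf_expand addrC. Qed.
Lemma Bf_xx x : Bf x x = 0.
Proof. by rewrite Bf_expand F2_addxx. Qed.
Lemma BfDr x y z : Bf x (y + z) = Bf x y + Bf x z.
Proof. by rewrite /Bf dotDr. Qed.
Lemma BfZr x c y : Bf x (c *: y) = c * Bf x y.
Proof. by rewrite /Bf dotC dotZl dotC. Qed.
Lemma BfDl x y z : Bf (y + z) x = Bf y x + Bf z x.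
Proof. by rewrite !(Bf_sym _ x) BfDr. Qed.
Lemma BfZl x c y : Bf (c *: y) x = c * Bf y x.
Proof. by rewrite !(Bf_sym _ x) BfZr. Qed.
Lemma Bf0l x : Bf 0 x = 0.
Proof. by rewrite -(scale0r 0) BfZl mul0r. Qed.
Lemma Bf_suml r (cs : 'I_r -> 'F_2) (bs : 'I_r -> bits n) x :
  Bf (\sum_j cs j *: bs j) x = \sum_j cs j * Bf (bs j) x.
Proof.
elim/big_rec2: _ => [|j s1 s2 _ <-]; first exact: Bf0l.
by rewrite BfDl BfZl.
Qed.

Lemma SqDl x y z : Sq (x + y) z = Sq x z + Sq y z.
Proof.
rewrite /Sq -big_split; apply: eq_bigr => i _; rewrite -big_split; apply: eq_bigr => j _.
rewrite mxE /=. ring.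
Qed.
Lemma SqDr x y z : Sq z (x + y) = Sq z x + Sq z y.
Proof.
rewrite /Sq -big_split; apply: eq_bigr => i _; rewrite -big_split; apply: eq_bigr => j _.
by rewrite mxE /=; ring.
Qed.

Variables (I : {set 'I_n}) (q : bits n -> 'F_2) (l : 'I_n -> 'F_2).
Hypothesis hq : forall az, in_ZI I az -> q az = \sum_i l i * az 0 i + Sq az az.

Lemma in_ZID x y : in_ZI I x -> in_ZI I y -> in_ZI I (x + y).
Proof. by move=> hx hy i iI; rewrite mxE hx ?hy ?addr0. Qed.

Lemma qD x y : in_ZI I x -> in_ZI I y -> q (x + y) = q x + q y + Bf x y.
Proof.
move=> hx hy; rewrite !hq //; last exact: in_ZID.
rewrite Bf_expand SqDl !SqDr.
have -> : \sum_i l i * (x + y) 0 i = \sum_i l i * x 0 i + \sum_i l i * y 0 i.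
  by rewrite -big_split; apply: eq_bigr => i _; rewrite mxE mulrDr.
ring.
Qed.
End Bform.
Section Iso.
Variables (n : nat) (I : {set 'I_n}) (Q : 'I_n -> 'I_n -> 'F_2).
Definition iso (W : {vspace bits n}) := forall x y, x \in W -> y \in W -> Bf Q x y = 0.

Lemma step W : (W <= ZI I)%VS -> iso W -> (2 * \dim W < \dim (ZI I))%N ->
  exists W', [/\ (W' <= ZI I)%VS, iso W' & \dim W' = (\dim W).+1].
Proof.
move=> sWZ isoW hdim.
set r := \dim W; set bs := vbasis W.
pose M : 'M['F_2]_(n, r) := \matrix_(i, j) phi Q (bs`_j) 0 i.
have hM : forall x j, (x *m M) 0 j = Bf Q (bs`_j) x.
  move=> x j; rewrite mxE /Bf dotC /dot; apply: eq_bigr => i _; by rewrite mxE.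
pose f : 'Hom(bits n, 'rV['F_2]_r) := linfun (mulmxr M).
have hK := limg_ker_dim f (ZI I).
have himg : (\dim (f @: ZI I) <= r)%N.
  by have := dimvS (subvf (f @: ZI I)); rewrite dimvf dim_matrix mul1r.
have nKW : ~~ ((ZI I :&: lker f) <= W)%VS.
  apply/negP => /dimvS h; move: hdim himg hK h; rewrite /r => h1 h2 h3 h4; rewrite -h3 in h1; have := leq_add h4 h2; rewrite addnn -mul2n => h; by move: (leq_ltn_trans h h1); rewrite ltnn.
case/subvPn: nKW => x; rewrite memv_cap => /andP [xZ xker] xW.
have fx : x *m M = 0 by move: xker; rewrite memv_ker lfunE /= => /eqP.
have Bwx : forall w, w \in W -> Bf Q w x = 0.
  move=> w /coord_vbasis ->; rewrite Bf_suml big1 // => j _.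
  by rewrite -hM fx mxE mulr0.
have x0 : x != 0 by apply: contraNneq xW => ->; exact: mem0v.
have cap0 : (W :&: <[x]> = 0)%VS.
  apply/eqP; rewrite -subv0; apply/subvP => y; rewrite memv_cap memv0 => /andP [yW /vlineP [c yc]].
  move: yW; rewrite yc; case: (F2_cases c) => ->; rewrite ?scale0r ?scale1r ?eqxx //.
  by rewrite (negbTE xW).
exists (W + <[x]>)%VS; split.
- by rewrite subv_add sWZ -memvE.
- move=> y1 y2 /memv_addP [w1 w1W [v1 /vlineP [c1 ->] ->]] /memv_addP [w2 w2W [v2 /vlineP [c2 ->] ->]].
  rewrite !BfDl !BfDr !BfZl !BfZr Bf_xx isoW // Bwx // (Bf_sym Q x w2) Bwx //.
  by rewrite !mulr0 !addr0.
- by rewrite dimv_disjoint_sum // dim_vline x0 addn1.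
Qed.

Lemma exist_iso k : (2 * k <= #|I|.+1)%N ->
  exists W, [/\ (W <= ZI I)%VS, iso W & \dim W = k].
Proof.
elim: k => [_|k IH hk].
  exists 0%VS; split; rewrite ?sub0v ?dimv0 //.
  by move=> x y; rewrite memv0 => /eqP -> _; exact: Bf0l.
have [W [sWZ isoW dW]] := IH (leq_trans (leq_mul (leqnn 2) (leqnSn k)) hk).
have := step sWZ isoW; rewrite dW dim_ZI; case; first lia.
by move=> W' [h1 h2 h3]; exists W'; split.
Qed.
End Iso.
Section Lin.
Variables (n : nat) (I : {set 'I_n}) (Q : 'I_n -> 'I_n -> 'F_2)
  (q : bits n -> 'F_2) (l : 'I_n -> 'F_2).
Hypothesis hq : forall az, in_ZI I az -> q az = \sum_i l i * az 0 i + Sq Q az az.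
Variable V : {vspace bits n}.
Hypotheses (sVZ : (V <= ZI I)%VS) (isoV : iso Q V).

Lemma inV_ZI x : x \in V -> in_ZI I x.
Proof. by move=> xV; apply: ZI_in; exact: (subvP sVZ). Qed.

Lemma q0 : q 0 = 0.
Proof.
rewrite hq; last by move=> i _; rewrite mxE.
rewrite big1 => [|i _]; last by rewrite mxE mulr0.
by rewrite /Sq big1 ?addr0 // => i _; rewrite big1 // => j _; rewrite !mxE ?mulr0 ?mul0r.
Qed.

Lemma qDV x y : x \in V -> y \in V -> q (x + y) = q x + q y.
Proof. by move=> xV yV; rewrite (qD hq) ?isoV ?addr0 //; apply: inV_ZI. Qed.

Lemma qZV c x : x \in V -> q (c *: x) = c * q x.
Proof. by move=> _; case: (F2_cases c) => ->; rewrite ?scale0r ?scale1r ?mul0r ?mul1r ?q0. Qed.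

Lemma q_sum r (cs : 'I_r -> 'F_2) (bs : 'I_r -> bits n) :
  (forall j, bs j \in V) -> q (\sum_j cs j *: bs j) = \sum_j cs j * q (bs j).
Proof.
move=> hb.
suff [] : (\sum_j cs j *: bs j) \in V /\ q (\sum_j cs j *: bs j) = \sum_j cs j * q (bs j) by [].
elim/big_rec2: _ => [|j s1 s2 _ [IH1 IH2]]; first by rewrite mem0v q0.
split; first by rewrite memvD // memvZ.
by rewrite qDV ?memvZ // qZV // IH2.
Qed.

Lemma q_lin : exists k : bits n, forall az, az \in V -> q az = dot k az.
Proof.
set bs := vbasis V.
exists (\row_(i < n) \sum_(j < \dim V) q bs`_j * coord bs j (delta_mx 0 i)) => v vV.
rewrite {1}(coord_vbasis vV) q_sum => [|j]; last by apply: vbasis_mem; apply: mem_nth; rewrite size_tuple.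
rewrite dotC /dot.
transitivity (\sum_(j < \dim V) \sum_(i < n) v 0 i * (q bs`_j * coord bs j (delta_mx 0 i))).
  apply: eq_bigr => j _.
  rewrite {1}[v]row_sum_delta linear_sum /= mulr_suml; apply: eq_bigr => i _.
  by rewrite linearZ /=; ring.
rewrite exchange_big /=; apply: eq_bigr => i _; by rewrite mxE mulr_sumr.
Qed.
End Lin.

Unset Implicit Arguments.

Theorem theorem1 (C : numClosedFieldType) (n : nat)
  (rho : op C n) (F : phase n -> 'F_2)
  (U : op C n) (S Sinv : phase n -> phase n) (P : phase n -> 'F_2)
  (I : {set 'I_n}) :
  density rho ->
  F 0 = 0 ->
  (forall u, 0 <= Wig F rho u) ->
  unitary U ->
  linear S -> cancel S Sinv -> cancel Sinv S ->
  (forall a b, sympl (S a) (S b) = sympl a b) ->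
  (forall a, U *m T C a *m adj U = sgn C (P a) *: T C (S a)) ->
  let F' := fun a => F (Sinv a) + P (Sinv a) in
  let q := fun az => F' (zpoint az) in
  (exists (c0 : 'F_2) (l : 'I_n -> 'F_2) (Q : 'I_n -> 'I_n -> 'F_2),
      forall az, in_ZI I az ->
        q az = c0 + \sum_(i < n) l i * az 0 i
                  + \sum_(i < n) \sum_(j < n) Q i j * az 0 i * az 0 j) ->
  exists (V : {vspace bits n}) (k : bits n),
    [/\ forall v, v \in V -> in_ZI I v,
        ((#|I|.+1)./2 <= \dim V)%N,
        forall az, az \in V -> q az = dot k az
      & forall (m : nat) (vs : m.-tuple (bits n)) (c : bits m),
          basis_of V vs ->
          \sum_(y : bits n | [forall j : 'I_m, dot (tnth vs j) y == c 0 j])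
              outp U rho y
          = \sum_(u : phase n |
                    [forall j : 'I_m, dot (tnth vs j) (xpart (S u) + k) == c 0 j])
              Wig F rho u].
Proof.
move=> _ hF0 _ hU hlin hSK hSiK hsym hcl F' q [c0 [l [Q hq0]]].
have hP0 : P 0 = 0 := P0 hU hcl hlin.
have S0 : S 0 = 0.
  have := hlin 1 0 0; rewrite !scale1r !addr0 => e.
  by apply: (addrI (S 0)); rewrite addr0 -e.
have Si0 : Sinv 0 = 0 by rewrite -{1}S0 hSK.
have qz : q 0 = 0 by rewrite /q /F' /zpoint row_mx0 Si0 hF0 hP0 addr0.
have c00 : c0 = 0.
  have h0 : in_ZI I (0 : bits n) by move=> i _; rewrite mxE.
  have := hq0 0 h0; rewrite qz big1 => [|i _]; last by rewrite mxE mulr0.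
  rewrite big1 ?addr0 // => [i _]; rewrite big1 // => j _; rewrite !mxE ?mulr0 ?mul0r //.
have hq : forall az, in_ZI I az -> q az = \sum_i l i * az 0 i + Sq Q az az.
  by move=> az haz; rewrite hq0 // c00 add0r.
have hk : (2 * (#|I|.+1)./2 <= #|I|.+1)%N by rewrite mul2n halfK leq_subr.
have [V [sVZ isoV dV]] := exist_iso Q hk.
have [kv hkv] := q_lin hq sVZ isoV.
exists V, kv; split.
- by move=> v; apply: inV_ZI.
- by rewrite dV.
- exact: hkv.
move=> m vs c hb.
apply: (@combine C n m vs c (outp U rho) (Wig F rho) (fun u => xpart (S u)) q kv).
  by move=> w; apply: (key rho F hU hSiK hsym hcl w).
move=> t; apply: hkv; rewrite /wt; apply: memv_suml => j _; apply: memvZ.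
by apply: (basis_mem hb); apply: mem_tnth.
Qed.
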